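(* For every formula $A$ of $\mathbf{L_1}$, if $TA$ is valid in first-order predicate logic with equality, then it is not the case that $\dashv_H A$.
   Context: Formulas of $\mathbf{L_1}$: built from atomic formulas $\epsilon ab$ ($a,b$ name variables, possibly equal) with primitive connectives $\vee,\sim$; $\wedge,\supset,\equiv$ defined as usual. Disjunctions may be associated in any way. $\vdash_H A$: $A$ belongs to the smallest set containing all instances of classical propositional tautologies and all formulas $\epsilon ab\supset\epsilon aa$, $(\epsilon ab\wedge\epsilon bc)\supset\epsilon ac$, $(\epsilon ab\wedge\epsilon bb)\supset\epsilon ba$, closed under modus ponens. Positive/negative parts (occurrences): $A$ is a positive part of $A$; if $B\vee C$ is a positive part then $B,C$ are positive parts; if $\sim B$ is a positive part then $B$ is a negative part; if $\sim B$ is a negative part then $B$ is a positive part. $F[B_+,B_-]$ denotes a formula in which some $B$ has one occurrence as positive part and another non-overlapping occurrence as negative part. Hintikka formula: a formula $H$ such that (1) $H$ is not of the form $F[B_+,B_-]$; (2) if $B\vee C$ is a negative part of $H$ then $B$ or $C$ is; (3) if $\epsilon ab$ is a negative part then so is $\epsilon aa$; (4) if $\epsilon ab,\epsilon bc$ are negative parts then so is $\epsilon ac$; (5) if $\epsilon ab,\epsilon bb$ are negative parts then so is $\epsilon ba$. $\mathbf{HAR}$: fix a name variable $a_0$; $\dashv_H$ is the smallest set such that $\dashv_H\epsilon a_0a_0$; $\dashv_H\sim\epsilon a_0a_0$; if $\vdash_H A\supset B$ and $\dashv_H B$ then $\dashv_H A$; if $\dashv_H A$ and $A$ is obtained from $B$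 by uniform substitution of name variables for name variables then $\dashv_H B$; if $A$ is a Hintikka formula that is a disjunction of atomic or negated atomic formulas, $\dashv_H A$, and $\epsilon ab$ is not a negative part of $A$, then $\dashv_H A\vee\epsilon ab$. Translation $T$ into first-order logic with equality, with a monadic predicate $F_a$ for each name variable $a$: $T\epsilon ab=\exists x(F_ax\wedge F_bx)\wedge\forall x\forall y(F_ax\wedge F_ay\supset x=y)$; $T(A\vee B)=TA\vee TB$; $T(\sim A)=\sim TA$. Valid: true in every structure with nonempty domain and $=$ as identity. *)

(* Defs.v *)
From Stdlib Require Import List.
Import ListNotations.

Inductive formula : Type :=
| Eps : nat -> nat -> formula
| Or  : formula -> formula -> formula
| Neg : formula -> formula.

Definition And (A B : formula) : formula := Neg (Or (Neg A) (Neg B)).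
Definition Imp (A B : formula) : formula := Or (Neg A) B.
Definition Iff (A B : formula) : formula := And (Imp A B) (Imp B A).

Inductive pform : Type :=
| PVar : nat -> pform
| POr  : pform -> pform -> pform
| PNeg : pform -> pform.

Fixpoint peval (v : nat -> bool) (P : pform) : bool :=
  match P with
  | PVar n => v n
  | POr P Q => orb (peval v P) (peval v Q)
  | PNeg P => negb (peval v P)
  end.

Definition tautology (P : pform) : Prop := forall v, peval v P = true.

Fixpoint psubst (s : nat -> formula) (P : pform) : formula :=
  match P with
  | PVar n => s n
  | POr P Q => Or (psubst s P) (psubst s Q)
  | PNeg P => Neg (psubst s P)
  end.

Definition taut_instance (A : formula) : Prop :=
  exists (P : pform) (s : nat -> formula), tautology P /\ A = psubst s P.

Inductive provable : formula -> Prop :=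
| pr_taut : forall A, taut_instance A -> provable A
| pr_ax1 : forall a b, provable (Imp (Eps a b) (Eps a a))
| pr_ax2 : forall a b c, provable (Imp (And (Eps a b) (Eps b c)) (Eps a c))
| pr_ax3 : forall a b, provable (Imp (And (Eps a b) (Eps b b)) (Eps b a))
| pr_mp : forall A B, provable (Imp A B) -> provable A -> provable B.

Inductive dir : Type := DL | DR | DN.

(* [occ s A p s' X] : if A is a part of polarity s (true = positive),
   then the occurrence of X at path p inside A is a part of polarity s'. *)
Inductive occ : bool -> formula -> list dir -> bool -> formula -> Prop :=
| occ_here : forall s A, occ s A [] s A
| occ_orL : forall B C p s' X, occ true B p s' X -> occ true (Or B C) (DL :: p) s' X
| occ_orR : forall B C p s' X, occ true C p s' X -> occ true (Or B C) (DR :: p) s' X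
| occ_neg : forall s B p s' X, occ (negb s) B p s' X -> occ s (Neg B) (DN :: p) s' X.

Definition pos_part_at (H : formula) (p : list dir) (X : formula) : Prop := occ true H p true X.
Definition neg_part_at (H : formula) (p : list dir) (X : formula) : Prop := occ true H p false X.
Definition neg_part (H : formula) (X : formula) : Prop := exists p, neg_part_at H p X.

Definition is_prefix (p q : list dir) : Prop := exists r, q = p ++ r.
Definition non_overlapping (p q : list dir) : Prop := ~ is_prefix p q /\ ~ is_prefix q p.

(* H is of the form F[B+, B-] *)
Definition has_clash (H : formula) : Prop :=
  exists B p q, pos_part_at H p B /\ neg_part_at H q B /\ non_overlapping p q.

Definition hintikka (H : formula) : Prop :=
  ~ has_clash H /\
  (forall B C, neg_part H (Or B C) -> neg_part H B \/ neg_part H C) /\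
  (forall a b, neg_part H (Eps a b) -> neg_part H (Eps a a)) /\
  (forall a b c, neg_part H (Eps a b) -> neg_part H (Eps b c) -> neg_part H (Eps a c)) /\
  (forall a b, neg_part H (Eps a b) -> neg_part H (Eps b b) -> neg_part H (Eps b a)).

Inductive literal : formula -> Prop :=
| lit_pos : forall a b, literal (Eps a b)
| lit_neg : forall a b, literal (Neg (Eps a b)).

Inductive lit_disj : formula -> Prop :=
| ld_lit : forall A, literal A -> lit_disj A
| ld_or : forall A B, lit_disj A -> lit_disj B -> lit_disj (Or A B).

Fixpoint nsubst (s : nat -> nat) (A : formula) : formula :=
  match A with
  | Eps a b => Eps (s a) (s b)
  | Or A B => Or (nsubst s A) (nsubst s B)
  | Neg A => Neg (nsubst s A)
  end.

Inductive rejected (a0 : nat) : formula -> Prop :=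
| rj_ax1 : rejected a0 (Eps a0 a0)
| rj_ax2 : rejected a0 (Neg (Eps a0 a0))
| rj_mp : forall A B, provable (Imp A B) -> rejected a0 B -> rejected a0 A
| rj_subst : forall A B (s : nat -> nat), rejected a0 A -> A = nsubst s B -> rejected a0 B
| rj_ext : forall A a b, hintikka A -> lit_disj A -> rejected a0 A ->
    ~ neg_part A (Eps a b) -> rejected a0 (Or A (Eps a b)).

Inductive fol : Type :=
| FP   : nat -> nat -> fol          (* FP a x  =  F_a x *)
| FEq  : nat -> nat -> fol
| FOr  : fol -> fol -> fol
| FAnd : fol -> fol -> fol
| FImp : fol -> fol -> fol
| FNeg : fol -> fol
| FEx  : nat -> fol -> fol
| FAll : nat -> fol -> fol.

Definition upd {D : Type} (rho : nat -> D) (x : nat) (d : D) : nat -> D :=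
  fun y => if Nat.eqb y x then d else rho y.

Fixpoint sat {D : Type} (I : nat -> D -> Prop) (rho : nat -> D) (phi : fol) : Prop :=
  match phi with
  | FP a x => I a (rho x)
  | FEq x y => rho x = rho y
  | FOr p q => sat I rho p \/ sat I rho q
  | FAnd p q => sat I rho p /\ sat I rho q
  | FImp p q => sat I rho p -> sat I rho q
  | FNeg p => ~ sat I rho p
  | FEx x p => exists d : D, sat I (upd rho x d) p
  | FAll x p => forall d : D, sat I (upd rho x d) p
  end.

(* valid: true in every structure (nonempty domain D, = as identity) under
   every assignment; an assignment rho : nat -> D witnesses nonemptiness. *)
Definition valid (phi : fol) : Prop :=
  forall (D : Type) (I : nat -> D -> Prop) (rho : nat -> D), sat I rho phi.

(** * The translation T (object variables x = 0, y = 1) *)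
Fixpoint T (A : formula) : fol :=
  match A with
  | Eps a b =>
      FAnd (FEx 0 (FAnd (FP a 0) (FP b 0)))
           (FAll 0 (FAll 1 (FImp (FAnd (FP a 0) (FP a 1)) (FEq 0 1))))
  | Or A B => FOr (T A) (T B)
  | Neg A => FNeg (T A)
  end.

(* Main.v *)
Require Import Defs.
From Stdlib Require Import List Classical ClassicalEpsilon FunctionalExtensionality PropExtensionality.
Import ListNotations.

Definition esem {D : Type} (I : nat -> D -> Prop) a b : Prop :=
  (exists x, I a x /\ I b x) /\ (forall x y, I a x -> I a y -> x = y).

Lemma sat_eps {D} (I : nat -> D -> Prop) rho a b :
  sat I rho (T (Eps a b)) <-> esem I a b.
Proof. unfold esem; cbn; unfold upd; cbn. split; intros [h1 h2]; split; auto;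
  intros x y; specialize (h2 x y); tauto. Qed.

Lemma sat_imp {D} (I : nat -> D -> Prop) rho X Y :
  sat I rho (T (Imp X Y)) <-> (sat I rho (T X) -> sat I rho (T Y)).
Proof. cbn. split; [tauto|]. intro H. destruct (classic (sat I rho (T X))); tauto. Qed.

Lemma sat_and {D} (I : nat -> D -> Prop) rho X Y :
  sat I rho (T (And X Y)) <-> (sat I rho (T X) /\ sat I rho (T Y)).
Proof. cbn. split; [|tauto]. intro H.
  destruct (classic (sat I rho (T X))); destruct (classic (sat I rho (T Y))); tauto. Qed.

Lemma taut_sound {D} (I : nat -> D -> Prop) rho s P :
  let v := fun n => if excluded_middle_informative (sat I rho (T (s n))) then true else false in
  sat I rho (T (psubst s P)) <-> peval v P = true.
Proof.
  intro v. induction P; cbn.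
  - unfold v. destruct excluded_middle_informative; split; intros; try tauto; discriminate.
  - rewrite Bool.orb_true_iff. cbn in IHP1, IHP2. tauto.
  - rewrite Bool.negb_true_iff. cbn in IHP. rewrite IHP.
    destruct (peval v P); split; intros; try tauto; try discriminate.
Qed.

Lemma provable_sound C : provable C -> forall D (I : nat -> D -> Prop) rho, sat I rho (T C).
Proof.
  induction 1; intros D I rho.
  - destruct H as [P [s [Ht ->]]]. apply (proj2 (taut_sound I rho s P)). apply Ht.
  - apply sat_imp. rewrite !sat_eps. unfold esem.
    intros [[x [H1 H2]] H3]. split; eauto.
  - apply sat_imp. rewrite sat_and, !sat_eps. unfold esem.
    intros [[[x [H1 H2]] H3] [[y [H4 H5]] H6]]. split; auto.
    exists x; split; auto. rewrite (H6 x y H2 H4); auto.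
  - apply sat_imp. rewrite sat_and, !sat_eps. unfold esem.
    intros [[[x [H1 H2]] H3] [[y [H4 H5]] H6]]. split; auto.
    exists x; split; auto.
  - specialize (IHprovable1 D I rho). apply (proj1 (sat_imp I rho A B)) in IHprovable1; auto.
Qed.

Lemma nsubst_sat {D} (I : nat -> D -> Prop) rho s B :
  sat (fun n => I (s n)) rho (T B) <-> sat I rho (T (nsubst s B)).
Proof.
  induction B; cbn.
  - tauto.
  - cbn in *; rewrite IHB1, IHB2; tauto.
  - cbn in *; rewrite IHB; tauto.
Qed.

Lemma occ_app s A p s1 Y r s' X :
  occ s A p s1 Y -> occ s1 Y r s' X -> occ s A (p ++ r) s' X.
Proof. induction 1; intros; cbn; try constructor; auto. Qed.

Lemma occ_split s A p r s' X :
  occ s A (p ++ r) s' X -> exists s1 Y, occ s A p s1 Y /\ occ s1 Y r s' X.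
Proof.
  revert s A. induction p; intros s A H; cbn in H.
  - exists s, A; split; [constructor|auto].
  - inversion H; subst;
    match goal with h : occ _ _ (p ++ r) _ _ |- _ =>
      destruct (IHp _ _ h) as [s1 [Y [? ?]]] end;
    exists s1, Y; split; auto; constructor; auto.
Qed.

Lemma occ_det s A p s1 Y : occ s A p s1 Y -> forall s2 Z, occ s A p s2 Z -> s1 = s2 /\ Y = Z.
Proof.
  induction 1; intros s2 Z H'; inversion H'; subst; auto.
Qed.

Lemma occ_eps s c d r s' X : occ s (Eps c d) r s' X -> r = [] /\ s' = s /\ X = Eps c d.
Proof. intro H; inversion H; subst; auto. Qed.

Section Model.
Variable A : formula.
Hypothesis HH : hintikka A.
Definition N c d := neg_part A (Eps c d).

Lemma N_refl c d : N c d -> N c c.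
Proof. destruct HH as [_ [_ [h _]]]. apply h. Qed.
Lemma N_trans a b c : N a b -> N b c -> N a c.
Proof. destruct HH as [_ [_ [_ [h _]]]]. apply h. Qed.
Lemma N_sym a b : N a b -> N b b -> N b a.
Proof. destruct HH as [_ [_ [_ [_ h]]]]. apply h. Qed.

Definition Dm := sum (nat -> Prop) (nat * bool)%type.
Definition K c : nat -> Prop := fun x => N c x.
Definition Im (d : nat) (z : Dm) : Prop :=
  match z with
  | inl k => exists c, N c c /\ k = K c /\ N c d
  | inr (e, _) => e = d /\ ~ N d d
  end.

Lemma model_eps c d : esem Im c d <-> N c d.
Proof.
  unfold esem; split.
  - intros [[x [H1 H2]] H3].
    assert (Ncc : N c c).
    { destruct (classic (N c c)) as [h|h]; auto.
      assert (inr (c, true) = inr (c, false) :> Dm) by (apply H3; cbn; auto). discriminate. }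
    destruct x as [k|[e bb]]; cbn in H1, H2.
    + destruct H1 as [c1 [N11 [-> N1c]]]. destruct H2 as [c2 [N22 [E N2d]]].
      assert (N c1 c2) by (change (K c1 c2); rewrite E; exact N22).
      assert (N c c1) by (apply N_sym; auto).
      eauto using N_trans.
    + destruct H1; subst; contradiction.
  - intro Ncd. assert (Ncc : N c c) by (eapply N_refl; eauto). split.
    + exists (inl (K c)); cbn; split; eauto.
    + assert (forall x, Im c x -> x = inl (K c)).
      { intros [k|[e bb]]; cbn.
        - intros [c1 [N11 [-> N1c]]]. f_equal. unfold K.
          apply functional_extensionality; intro x; apply propositional_extensionality.
          assert (N c c1) by (apply N_sym; auto).
          split; eauto using N_trans.
        - intros [_ h]; contradiction. }
      intros x y Hx Hy; rewrite (H x Hx), (H y Hy); auto.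
Qed.

Lemma model_ld X : lit_disj X -> forall p, occ true A p true X ->
  forall rho, ~ sat Im rho (T X).
Proof.
  induction 1; intros p Hp rho.
  - destruct H.
    + rewrite sat_eps, model_eps. intros [q Hq].
      destruct HH as [Hc _]. unfold neg_part_at in Hq.
      destruct (classic (is_prefix p q)) as [[r ->]|Hpq].
      { destruct (occ_split _ _ _ _ _ _ Hq) as [s1 [Y [H1 H2]]].
        destruct (occ_det _ _ _ _ _ Hp _ _ H1) as [<- <-].
        destruct (occ_eps _ _ _ _ _ _ H2) as [_ [? _]]; discriminate. }
      destruct (classic (is_prefix q p)) as [[r ->]|Hqp].
      { destruct (occ_split _ _ _ _ _ _ Hp) as [s1 [Y [H1 H2]]].
        destruct (occ_det _ _ _ _ _ Hq _ _ H1) as [<- <-].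
        destruct (occ_eps _ _ _ _ _ _ H2) as [_ [? _]]; discriminate. }
      apply Hc. exists (Eps a b), p, q. repeat split; auto.
    + change (~ ~ sat Im rho (T (Eps a b))). intro Hn. apply Hn. apply sat_eps, model_eps.
      exists (p ++ [DN]). unfold neg_part_at. eapply occ_app; eauto.
      constructor. constructor.
  - change (~ (sat Im rho (T A0) \/ sat Im rho (T B))). intros [h|h].
    + eapply (IHlit_disj1 (p ++ [DL])); eauto. eapply occ_app; eauto.
      constructor; constructor.
    + eapply (IHlit_disj2 (p ++ [DR])); eauto. eapply occ_app; eauto.
      constructor; constructor.
Qed.
End Model.

Definition CM (A : formula) : Prop :=
  exists (D : Type) (I : nat -> D -> Prop) (rho : nat -> D), ~ sat I rho (T A).

Lemma rejected_cm a0 A : rejected a0 A -> CM A.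
Proof.
  induction 1.
  - exists bool, (fun _ _ => False), (fun _ => true).
    rewrite sat_eps. unfold esem. intros [[x [h _]] _]; auto.
  - exists unit, (fun _ _ => True), (fun _ => tt).
    change (~ ~ sat (fun _ _ => True) (fun _ => tt) (T (Eps a0 a0))).
    rewrite sat_eps. intro h; apply h. unfold esem.
    split; [exists tt; auto|]. intros [] [] _ _; auto.
  - destruct IHrejected as [D [I [rho h]]]. exists D, I, rho. intro hA.
    apply h. pose proof (provable_sound _ H D I rho) as hs. apply (proj1 (sat_imp I rho A B)) in hs; auto.
  - destruct IHrejected as [D [I [rho h]]]. exists D, (fun n => I (s n)), rho.
    rewrite nsubst_sat. subst; auto.
  - exists Dm, (Im A), (fun _ => inr (0, true)).
    change (~ (sat (Im A) (fun _ => inr (0, true)) (T A) \/ sat (Im A) (fun _ => inr (0, true)) (T (Eps a b)))).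
    intros [h|h].
    + eapply (model_ld A H A H0 []); eauto. constructor.
    + apply sat_eps, model_eps in h; auto.
Qed.

Theorem theorem6p1 : forall (a0 : nat) (A : formula), valid (T A) -> ~ rejected a0 A.
Proof.
  intros a0 A Hv Hr. destruct (rejected_cm a0 A Hr) as [D [I [rho h]]]. apply h, Hv.
Qed.
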